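(* Let $\overline{G}$ be the roommate diversity game with red agents $R=\{r_1,r_2,r_3\}$, blue agents $B=\{b_1,\dots,b_6\}$, room size $3$, and the trichotomous preferences described in the context. Then every outcome $\pi$ of $\overline{G}$ satisfies $|D_\pi^n\cup D_\pi^-|\ge 2$, i.e. at least two agents are in a room whose fraction they do not approve of.
   Context: In a roommate diversity game with agent set $N=R\cup B$ ($R$ red, $B$ blue) and room size $s$, an outcome is a partition of $N$ into rooms of size $s$; $\pi(a)$ is the room containing $a$ and $\theta(C)=|C\cap R|/|C|$ is the fraction of red agents in room $C$. Each agent $a$ has a trichotomous preference given by a partition of the fractions into sets $D_a^+$ (approved), $D_a^n$ (neutral), $D_a^-$ (disapproved), possibly empty, with every approved fraction strictly preferred to every neutral one, every neutral one strictly preferred to every disapproved one, and indifference within each set. For an outcome $\pi$, $D_\pi^+=\{a:\theta(\pi(a))\in D_a^+\}$, and $D_\pi^n$, $D_\pi^-$ are defined analogously. The game $\overline{G}$: $s=3$, and fractions are in $\{0,1/3,2/3,1\}$; $r_1$: $D^+=\{1/3\}$, $D^-=\{2/3,1\}$; $r_2,r_3$: $D^+=\{2/3\}$, $D^-=\{1/3,1\}$; $b_1,b_2,b_3,b_4$: $D^+=\{1/3\}$, $D^n=\{2/3\}$, $D^-=\{0\}$; $b_5,b_6$: $D^+=\{0\}$, $D^-=\{1/3,2/3\}$. (Fractions not listed for an agent are impossible for its color: a red agent is never in a room of fraction $0$, a blue agent never in a room of fraction $1$.) *)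

(* Defs.v *)
From mathcomp Require Import all_boot all_order all_algebra.
Set Implicit Arguments. Unset Strict Implicit. Unset Printing Implicit Defensive.
Import Order.TTheory GRing.Theory Num.Theory.
Local Open Scope ring_scope.

(* The game \overline{G}: agents are 'I_9.
   Indices 0,1,2 are r_1,r_2,r_3 (red); indices 3..8 are b_1..b_6 (blue). *)
Definition agent := 'I_9.
Definition red : {set agent} := [set a : agent | (a < 3)%N].
Definition blue : {set agent} := ~: red.

Definition s : nat := 3.

Definition outcome (P : {set {set agent}}) : Prop :=
  partition P [set: agent] /\ forall C, C \in P -> #|C| = s.

Definition room (P : {set {set agent}}) (a : agent) : {set agent} := pblock P a.

Definition theta (C : {set agent}) : rat := (#|C :&: red|)%:R / (#|C|)%:R.

Definition Dplus (a : agent) : pred rat :=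
  match nat_of_ord a with
  | 0 => pred1 (1/3)
  | 1 | 2 => pred1 (2/3)
  | 3 | 4 | 5 | 6 => pred1 (1/3)
  | _ => pred1 0
  end.

Definition Dneutral (a : agent) : pred rat :=
  match nat_of_ord a with
  | 3 | 4 | 5 | 6 => pred1 (2/3)
  | _ => pred0
  end.

Definition Dminus (a : agent) : pred rat :=
  match nat_of_ord a with
  | 0 => [pred x | (x == 2/3) || (x == 1)]
  | 1 | 2 => [pred x | (x == 1/3) || (x == 1)]
  | 3 | 4 | 5 | 6 => pred1 0
  | _ => [pred x | (x == 1/3) || (x == 2/3)]
  end.

Definition Dpi_plus (P : {set {set agent}}) : {set agent} :=
  [set a | Dplus a (theta (room P a))].
Definition Dpi_neutral (P : {set {set agent}}) : {set agent} :=
  [set a | Dneutral a (theta (room P a))].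
Definition Dpi_minus (P : {set {set agent}}) : {set agent} :=
  [set a | Dminus a (theta (room P a))].

(* Main.v *)
Require Import Defs.
From mathcomp Require Import all_boot all_order all_algebra.
Set Implicit Arguments. Unset Strict Implicit.

Local Open Scope ring_scope.

Definition target (a : agent) : nat :=
  match nat_of_ord a with 0 => 1 | 1 | 2 => 2 | 3|4|5|6 => 1 | _ => 0 end%N.

Lemma unhappy_k (a : agent) (k : nat) :
  (k <= 3)%N -> ((a < 3)%N -> (1 <= k)%N) -> ((3 <= a)%N -> (k <= 2)%N) ->
  k != target a ->
  Dneutral a (k%:R / 3%:R) || Dminus a (k%:R / 3%:R).
Proof.
case: a => [[|[|[|[|[|[|[|[|[|//]]]]]]]]] Ha] /=;
case: k => [|[|[|[|//]]]] //= _ _ _ _; vm_compute; reflexivity.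
Qed.

Local Close Scope ring_scope.

Section Facts.
Variable P : {set {set agent}}.
Hypothesis HP : outcome P.

Let cov : cover P = [set: agent].
Proof. by case: HP => /andP[/eqP -> _] _. Qed.
Let triv : trivIset P.
Proof. by case: HP => /and3P[]. Qed.

Lemma in_room a : a \in room P a.
Proof. by rewrite /room mem_pblock cov inE. Qed.

Lemma card_room a : #|room P a| = 3.
Proof. case: HP => _ H; apply: H; apply: pblock_mem; by rewrite cov inE. Qed.

Lemma room_same a b : b \in room P a -> room P b = room P a.
Proof. exact: same_pblock. Qed.

Lemma room_eq a b : b \in room P a -> room P a = room P b.
Proof. by move=> H; rewrite (room_same H). Qed.

Definition K a := #|room P a :&: red|.

Lemma inS a : K a != target a -> a \in Dpi_neutral P :|: Dpi_minus P.
Proof.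
move=> Ht; rewrite !inE /theta card_room.
apply: unhappy_k => //.
- by apply: leq_trans (subset_leq_card (subsetIl _ red)) _; rewrite card_room.
- move=> Ha; rewrite card_gt0; apply/set0Pn; exists a.
  by rewrite inE in_room inE Ha.
- move=> Ha.
  have : (0 < #|room P a :\: red|)%N.
    by rewrite card_gt0; apply/set0Pn; exists a; rewrite !inE in_room andbT -leqNgt.
  by rewrite cardsD card_room /K; case: #|_| => [|[|[|]]].
Qed.

Lemma red_in a : (a \in red) = (a < 3).
Proof. by rewrite inE. Qed.

Lemma claim (r : agent) : (r == inord 1) || (r == inord 2) -> K r = 2 ->
  2 <= #|Dpi_neutral P :|: Dpi_minus P|.
Proof.
move=> Hr HK.
set S := Dpi_neutral P :|: Dpi_minus P.
have two : forall x y, x != y -> x \in S -> y \in S -> 2 <= #|S|.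
  move=> x y xy xS yS.
  have e := cards2 x y; rewrite xy in e; rewrite -[X in X <= _]e.
  apply: subset_leq_card; apply/subsetP => z; rewrite in_set2.
  by case/orP => /eqP ->.
set A := room P r.
have : #|A :\: red| == 1 by apply/eqP; rewrite cardsD card_room; move: HK; rewrite /K => ->.
case/cards1P => b Hb.
have bA : b \in A by have := set11 b; rewrite -Hb inE => /andP[].
have bR : b \notin red by have := set11 b; rewrite -Hb inE => /andP[].
have Kb : K b = 2 by rewrite /K (room_same bA).
have bS : b \in S.
  apply: inS; rewrite Kb; move: bR; rewrite red_in -leqNgt.
  by case: b {Hb bA Kb} => [[|[|[|[|[|[|[|[|[|//]]]]]]]]] ?].
have r0red : (inord 0 : agent) \in red by rewrite red_in inordK.
case: (boolP ((inord 0 : agent) \in A)) => r0A.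
  apply: (two (inord 0) b).
    by apply: contraNneq bR => <-.
  by apply: inS; rewrite /K (room_same r0A) -/(K r) HK /target inordK.
  by [].
set B := room P (inord 0).
have AB : A :&: B = set0.
  apply/setP => x; rewrite !inE; apply/negP => /andP[xA xB].
  move: r0A; rewrite /A (room_eq xA) -(room_eq xB); by rewrite in_room.
have redAB : red \subset A :|: B.
  have e : A :&: red = [set inord 1; inord 2].
    apply/eqP; rewrite eqEcard; apply/andP; split.
      apply/subsetP => x; rewrite !inE => /andP[xA xr].
      have xn : x != inord 0 by apply: contraNneq r0A => <-.
      move: xn xr; rewrite -!val_eqE /= !inordK //.
      by case: x {xA} => [[|[|[|//]]] ?].
    by move: HK; rewrite /K -/A cards2 => ->; case: (_ != _).
  apply/subsetP => x xr; rewrite inE.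
  case: (eqVneq x (inord 0)) => [->|xn]; first by rewrite /B in_room orbT.
  have : x \in [set inord 1; inord 2 : agent].
    move: xn xr; rewrite !inE -!val_eqE /= !inordK //.
    by case: x => [[|[|[|//]]] ?].
  by rewrite -e inE => /andP[->].
set U := ~: (A :|: B).
have cU : #|U| = 3.
  have := cardsC (A :|: B); rewrite cardsU AB cards0 /A /B !card_room card_ord.
  by rewrite -/U => /eqP; rewrite eqn_add2l => /eqP.
have : ~~ (U \subset [set x : agent | 7 <= x]).
  apply/negP => /subset_leq_card; rewrite cU.
  move=> H; have : #|[set x : agent | 7 <= x]| <= 2.
    apply: leq_trans (_ : #|[set inord 7; inord 8 : agent]| <= 2).
      apply: subset_leq_card; apply/subsetP => x; rewrite !inE -!val_eqE /= !inordK //.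
      by case: x => [[|[|[|[|[|[|[|[|[|//]]]]]]]]] ?].
    by rewrite cards2; case: (_ != _).
  by move=> /(leq_trans H).
case/subsetPn => x xU; rewrite inE -ltnNge => x7.
have xnAB : x \notin A :|: B by move: xU; rewrite inE.
have xR : x \notin red by apply: contra xnAB; apply: (subsetP redAB).
have Kx : K x = 0.
  apply/eqP; rewrite cards_eq0; apply/eqP/setP => y; rewrite !inE.
  apply/negP => /andP[yx yr].
  move: (subsetP redAB y (etrans (red_in y) yr)); rewrite inE => /orP[] yAB; move: xnAB; rewrite inE.
    by rewrite /A (room_eq yAB) -(room_eq yx) in_room.
  by rewrite /B (room_eq yAB) -(room_eq yx) in_room orbT.
apply: (two x b).
- by apply: contraNneq xnAB => ->; rewrite inE bA.
- apply: inS; rewrite Kx; move: xR x7; rewrite red_in -leqNgt.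
  by case: x {xU xnAB Kx} => [[|[|[|[|[|[|[|[|[|//]]]]]]]]] ?].
- by [].
Qed.

End Facts.

Theorem mainTheorem6 (P : {set {set agent}}) :
  outcome P -> (2 <= #|Dpi_neutral P :|: Dpi_minus P|)%N.
Proof.
move=> HP.
case: (eqVneq (K P (inord 1)) 2) => [H|H1]; first by apply: (claim HP _ H); rewrite eqxx.
case: (eqVneq (K P (inord 2)) 2) => [H|H2]; first by apply: (claim HP _ H); rewrite eqxx orbT.
have e : #|[set (inord 1 : agent); inord 2]| = 2 by rewrite cards2 -val_eqE /= !inordK.
rewrite -[X in X <= _]e; apply: subset_leq_card; apply/subsetP => z; rewrite in_set2.
have t1 : target (inord 1) = 2 by rewrite /target inordK.
have t2 : target (inord 2) = 2 by rewrite /target inordK.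
case/orP => /eqP ->; apply: (inS HP).
  by rewrite t1.
by rewrite t2.
Qed.
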